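(* Let $k=\mathbb R$ or $\mathbb C$, let $(E,g)$ be a finite-dimensional inner product vector space over $k$, let $f\in\operatorname{End}_k(E)$, let $H_1,\dots,H_n$ be $f$-invariant subspaces with $E=H_1\oplus\dots\oplus H_n$, and write $f_i=f|_{H_i}$. Let $\widetilde{\mathcal H}_f^\perp=[\operatorname{Ker} f_1]_1^\perp\oplus\dots\oplus[\operatorname{Ker} f_n]_n^\perp$. Then $\widetilde{\mathcal H}_f^\perp=[\operatorname{Ker} f]^\perp$ if and only if $[\operatorname{Ker} f_i]_i^\perp\subseteq\big[\sum_{j\ne i}\operatorname{Ker} f_j\big]^\perp$ for every $i\in\{1,\dots,n\}$.
   Context: An inner product is linear in the first argument, conjugate-symmetric and positive definite. For a subspace $U\subseteq E$, $U^\perp=\{e\in E:g(u,e)=0\ \forall u\in U\}$; for a subspace $W\subseteq H_i$, $[W]_i^\perp=\{v\in H_i:g(w,v)=0\ \forall w\in W\}$. *)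

(* Defs.v *)
From HB Require Import structures.
From mathcomp Require Import all_boot all_order all_algebra.
Set Implicit Arguments. Unset Strict Implicit. Unset Printing Implicit Defensive.
Import Order.TTheory GRing.Theory Num.Theory.
Local Open Scope ring_scope.

(* The scalar field K is an arbitrary numFieldType equipped with an involutive
   ring automorphism [conj]: K = R with conj = id, or K = C with
   conj = complex conjugation, are the two cases of the paper. *)

Definition inner_product (K : numFieldType) (E : vectType K)
    (conj : K -> K) (g : E -> E -> K) : Prop :=
  [/\ forall (a : K) (x y z : E), g (a *: x + y) z = a * g x z + g y z,
      forall x y : E, g y x = conj (g x y)
    & forall x : E, x != 0 -> 0 < g x x].

Definition orthv (K : numFieldType) (E : vectType K) (g : E -> E -> K)
    (U : {vspace E}) (e : E) : Prop :=
  forall u, u \in U -> g u e = 0.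

Definition rel_orthv (K : numFieldType) (E : vectType K) (g : E -> E -> K)
    (Hi W : {vspace E}) (v : E) : Prop :=
  v \in Hi /\ orthv g W v.

Definition sum_sets (K : numFieldType) (E : vectType K) (n : nat)
    (P : 'I_n -> E -> Prop) (v : E) : Prop :=
  exists u : 'I_n -> E, (forall i, P i (u i)) /\ v = \sum_(i < n) u i.

(* Main.v *)
Require Import Defs.
From HB Require Import structures.
From mathcomp Require Import all_boot all_order all_algebra.
Import Order.TTheory GRing.Theory Num.Theory.
Local Open Scope ring_scope.

Section G.
Context {K : numFieldType} {conj : {rmorphism K -> K}} {E : vectType K} {g : E -> E -> K}
  (hg : inner_product conj g).

Lemma gL a x y z : g (a *: x + y) z = a * g x z + g y z.
Proof. by move: hg; rewrite /inner_product => -[h _ _]. Qed.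
Lemma gDl x y z : g (x + y) z = g x z + g y z.
Proof. by rewrite -[x in LHS]scale1r gL mul1r. Qed.
Lemma g0l z : g 0 z = 0.
Proof. by apply: (addIr (g 0 z)); rewrite add0r -gDl addr0. Qed.
Lemma gZl a x z : g (a *: x) z = a * g x z.
Proof. by rewrite -[_ *: x]addr0 gL g0l addr0. Qed.
Lemma gNl x z : g (- x) z = - g x z.
Proof. by rewrite -scaleN1r gZl mulN1r. Qed.
Lemma gBl x y z : g (x - y) z = g x z - g y z.
Proof. by rewrite gDl gNl. Qed.
Lemma gsuml (I : Type) (r : seq I) (P : pred I) (F : I -> E) z :
  g (\sum_(i <- r | P i) F i) z = \sum_(i <- r | P i) g (F i) z.
Proof. by elim/big_rec2: _ => [|i a b _ <-]; rewrite ?g0l ?gDl. Qed.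
Lemma gsym x y : g y x = conj (g x y).
Proof. by move: hg; rewrite /inner_product => -[_ h _]. Qed.
Lemma gDr x y z : g z (x + y) = g z x + g z y.
Proof. by rewrite gsym gDl rmorphD -!gsym. Qed.
Lemma g0r z : g z 0 = 0.
Proof. by rewrite gsym g0l rmorph0. Qed.
Lemma gNr x z : g z (- x) = - g z x.
Proof. by rewrite gsym gNl rmorphN -gsym. Qed.
Lemma gBr x y z : g z (x - y) = g z x - g z y.
Proof. by rewrite gDr gNr. Qed.
Lemma gZr a x z : g z (a *: x) = conj a * g z x.
Proof. by rewrite gsym gZl rmorphM -gsym. Qed.
Lemma gsumr (I : Type) (r : seq I) (P : pred I) (F : I -> E) z :
  g z (\sum_(i <- r | P i) F i) = \sum_(i <- r | P i) g z (F i).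
Proof. by elim/big_rec2: _ => [|i a b _ <-]; rewrite ?g0r ?gDr. Qed.
Lemma gdef x : g x x = 0 -> x = 0.
Proof. move: hg; rewrite /inner_product => -[_ _ h]; apply: contra_eq => /h; rewrite lt0r => /andP[]//. Qed.

Lemma orth_decomp (W : {vspace E}) x :
  exists2 a, a \in W & forall w, w \in W -> g w (x - a) = 0.
Proof.
pose m := \dim W; pose B := vbasis W.
pose phi y : 'rV[K]_m := \row_j g y (vbasis W)`_j.
have phiL : linear phi.
  by move=> c y z; apply/rowP => j; rewrite !mxE gDl gZl.
pose phiM := GRing.isLinear.Build _ _ _ _ phi phiL.
pose Phi : {linear E -> 'rV[K]_m} := HB.pack phi phiM.
pose L := linfun Phi.
have LE y : L y = phi y by rewrite (lfunE Phi).
have ker0 : (W :&: lker L = 0)%VS.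
  apply/eqP; rewrite -subv0; apply/subvP => y; rewrite memv_cap memv_ker LE memv0.
  case/andP => yW /eqP h0; apply/eqP/gdef.
  rewrite {2}(coord_vbasis yW) gsumr big1 // => j _.
  rewrite gZr; have := congr1 (fun M : 'rV_m => M 0 j) h0; rewrite !mxE => ->.
  by rewrite mulr0.
have imgfull : (L @: W)%VS = fullv.
  apply/eqP; rewrite eqEdim subvf /= limg_dim_eq // dimvf /=.
  by rewrite /dim /= mul1n.
have : phi x \in (L @: W)%VS by rewrite imgfull memvf.
case/memv_imgP => a aW; rewrite LE => ea; exists a => // w wW.
rewrite gsym (coord_vbasis wW) gsumr big1 ?rmorph0 // => j _.
rewrite gZr gBl; have := congr1 (fun M : 'rV_m => M 0 j) ea; rewrite !mxE => ->.
by rewrite subrr mulr0.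
Qed.
End G.

Theorem lemma3p8 (K : numFieldType) (conj : {rmorphism K -> K})
    (conjK : involutive conj) (E : vectType K) (g : E -> E -> K)
    (hg : inner_product conj g) (f : 'End(E)) (n : nat)
    (H : 'I_n -> {vspace E})
    (Hinv : forall i, (f @: H i <= H i)%VS)
    (Hdir : directv (\sum_(i < n) H i)%VS)
    (Hfull : (\sum_(i < n) H i)%VS = fullv) :
  (forall v : E,
      sum_sets (fun i => rel_orthv g (H i) (lker f :&: H i)%VS) v
      <-> orthv g (lker f) v)
  <->
  (forall (i : 'I_n) (v : E),
      rel_orthv g (H i) (lker f :&: H i)%VS v ->
      orthv g (\sum_(j < n | j != i) (lker f :&: H j))%VS v).
Proof.
have kerdec k : k \in lker f ->
    exists2 ks : 'I_n -> E, forall i, ks i \in (lker f :&: H i)%VS & k = \sum_i ks i.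
  move=> kk; have : k \in (\sum_(i < n) H i)%VS by rewrite Hfull memvf.
  case/memv_sumP => vs vsH ek.
  have f0 : forall i, f (vs i) = 0.
    move/directv_sum_independent: Hdir => hD i; apply: (hD (fun i => f (vs i))) => //.
      by move=> j _; apply: (subvP (Hinv j)); apply: memv_img; apply: vsH.
    by rewrite -linear_sum -ek; apply/eqP; rewrite -memv_ker.
  by exists vs => // i; rewrite memv_cap memv_ker f0 eqxx vsH.

pose Ks i := (lker f :&: H i)%VS.
have RL : (forall (i : 'I_n) (v : E),
      rel_orthv g (H i) (lker f :&: H i)%VS v ->
      orthv g (\sum_(j < n | j != i) (lker f :&: H j))%VS v) ->
    forall v, sum_sets (fun i => rel_orthv g (H i) (lker f :&: H i)%VS) v ->
    orthv g (lker f) v.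
  move=> hR v [u [hu ->]] k /kerdec [ks ksK ->].
  rewrite (gsumr hg) big1 // => i _.
  rewrite (gsuml hg) (bigD1 i) //=.
  have [_ hi] := hu i.
  rewrite hi ?ksK // add0r -(gsuml hg).
  apply: (hR i _ (hu i)); apply: memv_sumr => j _; exact: ksK.
split.
  move=> hL i v hv u hu.
  have : orthv g (lker f) v.
    apply/hL; exists (fun j => if j == i then v else 0); split.
      move=> j; case: eqP => [-> //|_]; split; first exact: mem0v.
      by move=> w _; rewrite (g0r hg).
    by rewrite (bigD1 i) //= eqxx big1 ?addr0 // => j /negPf ->.
  apply; move: hu; apply: subvP; apply/subv_sumP => j _; exact: capvSl.
move=> hR v; split; first exact: RL.
move=> hv.
have : v \in (\sum_(i < n) H i)%VS by rewrite Hfull memvf.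
case/memv_sumP => vs vsH ev.
have dec i : exists a, a \in Ks i /\ forall w, w \in Ks i -> g w (vs i - a) = 0.
  by have [a ha1 ha2] := (orth_decomp hg) (Ks i) (vs i); exists a.
have [a ha] := fin_all_exists dec.
pose b i := vs i - a i.
have bS : sum_sets (fun i => rel_orthv g (H i) (lker f :&: H i)%VS) (\sum_i b i).
  exists b; split => // i; case: (ha i) => aK ao; split; last exact: ao.
  apply: memvB; [exact: vsH | exact: (subvP (capvSr _ _) _ aK)].
have AK : \sum_i a i \in lker f.
  by apply: rpred_sum => i _; case: (ha i) => aK _; exact: (subvP (capvSl _ _) _ aK).
have eA : v = \sum_i a i + \sum_i b i.
  by rewrite ev -big_split /=; apply: eq_bigr => i _; rewrite /b addrC subrK.
have A0 : \sum_i a i = 0.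
  apply: (gdef hg).
  have e2 : \sum_i a i = v - \sum_i b i by rewrite eA addrK.
  rewrite {2}e2.
  by rewrite (gBr hg) hv ?(RL hR _ bS) ?subrr.
exists b; split; last by rewrite eA A0 add0r.
move=> i; case: (ha i) => aK ao; split; last exact: ao.
apply: memvB; [exact: vsH | exact: (subvP (capvSr _ _) _ aK)].
Qed.
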